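(* Let $\mathbf x$ be a $p$-variate random vector with finite second moments and full-rank covariance, let $\mathbf x^{st}=\mathrm{Cov}(\mathbf x)^{-1/2}(\mathbf x-E(\mathbf x))$, and suppose there exist a nonsingular $\mathbf A$ and vector $\mathbf b$ such that $\mathbf z=\mathbf A\mathbf x+\mathbf b=(z_1,\dots,z_p)'$ has mutually independent components with $E(\mathbf z)=\mathbf 0$ and $\mathrm{Cov}(\mathbf z)=\mathbf I_p$. Let $D$ be a squared dispersion measure defined on all linear combinations of $z_1,\dots,z_p$, and let $\mathbf v\in\mathbb{R}^p$ with $\mathbf v'\mathbf v=1$. (1) If $D$ is subadditive, then $D(\mathbf v'\mathbf x^{st})\le\max_j D(z_j)$. (2) If $D$ is superadditive, then $D(\mathbf v'\mathbf x^{st})\ge\min_j D(z_j)$.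
   Context: $\mathrm{Cov}(\mathbf x)^{-1/2}=\mathbf U\mathbf D^{-1/2}\mathbf U'$ where $\mathrm{Cov}(\mathbf x)=\mathbf U\mathbf D\mathbf U'$ is the eigendecomposition. A squared dispersion measure $D$ depends only on the distribution of its argument and satisfies $D(ax+b)=a^2D(x)$ for all real $a,b$, $D\ge0$. It is subadditive if $D(x+y)\le D(x)+D(y)$ for all independent $x,y$, and superadditive if $D(x+y)\ge D(x)+D(y)$ for all independent $x,y$. *)

(* Defs.v *)
From HB Require Import structures.
From mathcomp Require Import all_boot all_order all_algebra.
From mathcomp Require Import all_classical all_reals all_analysis.
Set Implicit Arguments. Unset Strict Implicit. Unset Printing Implicit Defensive.
Import Order.TTheory GRing.Theory Num.Theory.

Local Open Scope classical_set_scope.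
Local Open Scope ring_scope.

Section defs.
Context {d : measure_display} {T : measurableType d} {R : realType}.
Variable P : probability T R.

Definition meanvec (p : nat) (x : 'I_p -> T -> R) : 'cV[R]_p :=
  \col_i fine ('E_P[x i]).

Definition covmx (p : nat) (x : 'I_p -> T -> R) : 'M[R]_p :=
  \matrix_(i, j) fine (covariance P (x i) (x j)).

Definition affine_rv (p : nat) (A : 'M[R]_p) (b : 'cV[R]_p)
  (x : 'I_p -> T -> R) : 'I_p -> T -> R :=
  fun i t => \sum_(j < p) A i j * x j t + b i 0.

(* U D^{-1/2} U' for an eigendecomposition U diag(dv) U' *)
Definition inv_sqrt_from_eig (p : nat) (U : 'M[R]_p) (dv : 'rV[R]_p) : 'M[R]_p :=
  U *m diag_mx (\row_i (Num.sqrt (dv 0 i))^-1) *m U^T.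

Definition standardize (p : nat) (S : 'M[R]_p) (x : 'I_p -> T -> R) :
  'I_p -> T -> R :=
  fun i t => \sum_(j < p) S i j * (x j t - meanvec x j 0).

Definition lincomb (p : nat) (v : 'cV[R]_p) (y : 'I_p -> T -> R) : T -> R :=
  fun t => \sum_(i < p) v i 0 * y i t.

Definition mutually_independent (p : nat) (z : 'I_p -> T -> R) : Prop :=
  forall B : 'I_p -> set R, (forall i, measurable (B i)) ->
    P [set t | forall i, B i (z i t)] =
    (\big[*%E/1%E]_(i < p) P (z i @^-1` B i))%E.

Definition independent2 (X Y : T -> R) : Prop :=
  forall A B : set R, measurable A -> measurable B ->
    P (X @^-1` A `&` Y @^-1` B) = (P (X @^-1` A) * P (Y @^-1` B))%E.

Definition same_distribution (X Y : T -> R) : Prop :=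
  forall B : set R, measurable B -> P (X @^-1` B) = P (Y @^-1` B).

Definition lin_span (p : nat) (z : 'I_p -> T -> R) : set (T -> R) :=
  [set X | exists (c : 'I_p -> R) (c0 : R),
      X = (fun t => \sum_(i < p) c i * z i t + c0)].

Definition sq_dispersion (dom : set (T -> R)) (D : (T -> R) -> R) : Prop :=
  [/\ (forall X Y, dom X -> dom Y -> same_distribution X Y -> D X = D Y),
      (forall X (a b : R), dom X -> D (fun t => a * X t + b) = a ^+ 2 * D X)
    & (forall X, dom X -> 0 <= D X)].

Definition disp_subadditive (dom : set (T -> R)) (D : (T -> R) -> R) : Prop :=
  forall X Y, dom X -> dom Y -> independent2 X Y -> D (X \+ Y) <= D X + D Y.

Definition disp_superadditive (dom : set (T -> R)) (D : (T -> R) -> R) : Prop :=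
  forall X Y, dom X -> dom Y -> independent2 X Y -> D X + D Y <= D (X \+ Y).

End defs.

(* Main.v *)
Require Import Defs.
From HB Require Import structures.
From mathcomp Require Import all_boot all_order all_algebra.
From mathcomp Require Import all_classical all_reals all_analysis.
From mathcomp Require Import measurable_realfun.
From mathcomp Require Import ring lra.
Import Order.TTheory GRing.Theory Num.Theory.
Local Open Scope classical_set_scope.
Local Open Scope ring_scope.
Section indep.
Context (d : measure_display) (T : measurableType d) (R : realType) (P : probability T R).

Lemma indep_sum (n : nat) (z : 'I_n -> T -> R)
  (hz : mutually_independent P z) (mz : forall i, measurable_fun setT (z i))
  (J : pred 'I_n) (m : 'I_n) (hm : ~~ J m) (c : 'I_n -> R) (a : R) :
  independent2 P (fun t => \sum_(i < n | J i) c i * z i t) (fun t => a * z m t).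
Proof.
move=> A B mA mB.
set Bm := [set r : R | B (a * r)].
have mBm : measurable Bm.
  have : measurable_fun setT (fun r : R => a * r).
    exact: mulrl_measurable.
  by move=> /(_ measurableT _ mB); rewrite setTI.
rewrite -[(fun t => _) @^-1` B]/(z m @^-1` Bm).
set Zb := z m @^-1` Bm.
have mZb : measurable Zb by rewrite -[Zb]setTI; exact: mz.
pose G := [set E : set T | exists C : 'I_n -> set R,
  (forall i, measurable (C i)) /\ E = [set t | forall i, J i -> C i (z i t)]].
have key : forall E, G E -> P (E `&` Zb) = ((fine (P Zb))%:E * P E)%E.
  move=> E [C [mC ->]].
  pose B1 i := if J i then C i else if i == m then Bm else setT.
  pose B2 i := if J i then C i else setT.
  have mB1 i : measurable (B1 i).
    by rewrite /B1; case: (J i) => //; case: (i == m).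
  have mB2 i : measurable (B2 i) by rewrite /B2; case: (J i).
  have -> : [set t | forall i, J i -> C i (z i t)] `&` Zb =
            [set t | forall i, B1 i (z i t)].
    apply/seteqP; split => t /=.
      move=> [h1 h2] i; rewrite /B1; case: ifPn => Ji; first exact: h1.
      by case: eqP => // ->.
    move=> h; split.
      by move=> i Ji; have := h i; rewrite /B1 Ji.
    by have := h m; rewrite /B1 (negbTE hm) eqxx.
  have -> : [set t | forall i, J i -> C i (z i t)] =
            [set t | forall i, B2 i (z i t)].
    apply/seteqP; split => t /= h i.
      by rewrite /B2; case: ifPn => Ji //; exact: h.
    by move=> Ji; have := h i; rewrite /B2 Ji.
  rewrite (hz _ mB1) (hz _ mB2) (bigD1 m)//= [in RHS](bigD1 m)//=.
  have -> : z m @^-1` B1 m = Zb by rewrite /B1 (negbTE hm) eqxx.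
  have -> : z m @^-1` B2 m = setT by rewrite /B2 (negbTE hm).
  rewrite probability_setT mul1e fineK ?fin_num_measure//.
  congr (_ * _)%E; apply: eq_bigr => i /negbTE im.
  by rewrite /B1 /B2; case: (J i) => //; rewrite im.
have Gm : G `<=` measurable.
  move=> E [C [mC ->]].
  have -> : [set t | forall i, J i -> C i (z i t)] =
            \bigcap_(i in [set i | J i]) (z i @^-1` C i).
    by apply/seteqP; split => t /= h i; apply: h.
  apply: fin_bigcap_measurable; first exact: finite_finset.
  by move=> i _; rewrite -[X in measurable X]setTI; exact: mz.
have GT : G setT.
  exists (fun=> setT); split => //.
  by apply/seteqP; split.
have GI : setI_closed G.
  move=> E1 E2 [C1 [mC1 ->]] [C2 [mC2 ->]].
  exists (fun i => C1 i `&` C2 i); split; first by move=> i; exact: measurableI.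
  apply/seteqP; split => t /=.
    by move=> [h1 h2] i Ji; split; [exact: h1|exact: h2].
  by move=> h; split => i Ji; have [] := h i Ji.
pose r := NngNum (fine_ge0 (measure_ge0 P Zb)).
have uniq := @g_sigma_algebra_measure_unique _ _ _ G Gm (fun=> setT) (fun=> GT)
  (bigcup_const _ (ex_intro _ 0%N I)) (mrestr P mZb) (mscale r P) GI.
have mzT i : J i -> measurable_fun (T:=g_sigma_algebraType G) setT (z i).
  move=> Ji _ C mC; rewrite setTI.
  apply: sub_sigma_algebra.
  exists (fun j => if j == i then C else setT); split.
    by move=> j; case: (j == i).
  apply/seteqP; split => t /=.
    by move=> h j Jj; case: eqP => // ->.
  by move=> h; have := h i Ji; rewrite eqxx.
have mY : measurable_fun (T:=g_sigma_algebraType G) setT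
    (fun t => \sum_(i < n | J i) c i * z i t).
  under eq_fun do rewrite big_mkcond.
  apply: measurable_sum => i.
  case: (boolP (J i)) => Ji.
    by apply: measurable_funM; [exact: measurable_cst|exact: mzT].
  exact: measurable_cst.
have HYA := mY measurableT _ mA; rewrite setTI in HYA.
have fin : nat -> (mrestr P mZb setT < +oo)%E.
  move=> _; rewrite /mrestr; apply: (le_lt_trans (probability_le1 _ _)); last exact: ltry.
  exact: measurableI.
have := uniq (fun E GE => key E GE) fin _ HYA.
rewrite /mrestr /mscale /= => h; rewrite [LHS]h.
rewrite muleC; congr (_ * _)%E; rewrite fineK ?fin_num_measure//.
Qed.
End indep.

Section disp.
Context (d : measure_display) (T : measurableType d) (R : realType) (P : probability T R).
Lemma span_sum {n} {z : 'I_n -> T -> R} (J : pred 'I_n) (c : 'I_n -> R) :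
  lin_span z (fun t => \sum_(i < n | J i) c i * z i t).
Proof.
exists (fun i => if J i then c i else 0), 0; apply/funext => t.
rewrite addr0 big_mkcond; apply: eq_bigr => i _.
by case: (J i); rewrite ?mul0r.
Qed.

Lemma span_one {n} {z : 'I_n -> T -> R} (m : 'I_n) (a : R) :
  lin_span z (fun t => a * z m t).
Proof.
have -> : (fun t => a * z m t) = (fun t => \sum_(i < n | i == m) a * z i t).
  by apply/funext => t; rewrite big_pred1_eq.
exact: span_sum.
Qed.

Lemma span_z {n} {z : 'I_n -> T -> R} (m : 'I_n) : lin_span z (z m).
Proof.
have -> : z m = (fun t => 1 * z m t) by apply/funext => t; rewrite mul1r.
exact: span_one.
Qed.

Lemma disp_sum n (z : 'I_n -> T -> R)
  (hz : mutually_independent P z) (mz : forall i, measurable_fun setT (z i))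
  (D : (T -> R) -> R) (hD : sq_dispersion P (lin_span z) D) (w : 'I_n -> R) :
  (disp_subadditive P (lin_span z) D ->
    D (fun t => \sum_(i < n) w i * z i t) <= \sum_(i < n) w i ^+ 2 * D (z i)) /\
  (disp_superadditive P (lin_span z) D ->
    \sum_(i < n) w i ^+ 2 * D (z i) <= D (fun t => \sum_(i < n) w i * z i t)).
Proof.
case: hD => _ hsc _.
pose S k := fun t => \sum_(i < n | (i < k)%N) w i * z i t.
pose Q k := \sum_(i < n | (i < k)%N) w i ^+ 2 * D (z i).
have S0 : D (S 0%N) = 0.
  have -> : S 0%N = (fun t => 0 * S 0%N t + 0).
    by apply/funext => t; rewrite mul0r addr0 /S big_pred0.
  by rewrite hsc ?expr0n ?mul0r //; exact: span_sum.
have Q0 : Q 0%N = 0 by rewrite /Q big_pred0.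
have Sstep k (kn : (k < n)%N) :
  S k.+1 = S k \+ (fun t => w (Ordinal kn) * z (Ordinal kn) t).
  apply/funext => t; rewrite /S /= (bigD1 (Ordinal kn)) //= addrC; congr (_ + _).
  apply: eq_bigl => i; rewrite -val_eqE /= ltnS; case: ltngtP => // ->; by rewrite eqxx.
have Qstep k (kn : (k < n)%N) :
  Q k.+1 = Q k + w (Ordinal kn) ^+ 2 * D (z (Ordinal kn)).
  rewrite /Q /= (bigD1 (Ordinal kn)) //= addrC; congr (_ + _).
  apply: eq_bigl => i; rewrite -val_eqE /= ltnS; case: ltngtP => // ->; by rewrite eqxx.
have Dwz m : D (fun t => w m * z m t) = w m ^+ 2 * D (z m).
  rewrite -(hsc _ _ 0); last exact: span_z.
  by congr D; apply/funext => t; rewrite addr0.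
have ind k (kn : (k < n)%N) :
  independent2 P (S k) (fun t => w (Ordinal kn) * z (Ordinal kn) t).
  by apply: (@indep_sum d T R P) => //=; rewrite ltnn.
have Sn : S n = (fun t => \sum_(i < n) w i * z i t).
  by apply/funext => t; rewrite /S; apply: eq_bigl => i; rewrite ltn_ord.
have Qn : Q n = \sum_(i < n) w i ^+ 2 * D (z i).
  by rewrite /Q; apply: eq_bigl => i; rewrite ltn_ord.
split => hsub.
  suff : forall k, (k <= n)%N -> D (S k) <= Q k by move/(_ n (leqnn n)); rewrite Sn Qn.
  elim => [|k IH] kn; first by rewrite S0 Q0.
  rewrite (Sstep k kn) (Qstep k kn).
  have h := hsub _ _ (span_sum _ _) (span_one _ _) (ind k kn).
  apply: le_trans h _.
  by rewrite Dwz lerD2r IH // ltnW.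
suff : forall k, (k <= n)%N -> Q k <= D (S k) by move/(_ n (leqnn n)); rewrite Sn Qn.
elim => [|k IH] kn; first by rewrite S0 Q0.
rewrite (Sstep k kn) (Qstep k kn).
have h := hsub _ _ (span_sum _ _) (span_one _ _) (ind k kn).
apply: le_trans _ h.
by rewrite Dwz lerD2r IH // ltnW.
Qed.
End disp.

Section lin.
Context (d : measure_display) (T : measurableType d) (R : realType) (P : probability T R).

Lemma one_le2 : (1 <= (2 : R)%:E)%E.
Proof. by rewrite lee_fin ler1n. Qed.

Lemma LfD {q : \bar R} (q1 : (1 <= q)%E) (f g : T -> R) :
  f \in Lfun P q -> g \in Lfun P q -> (fun t => f t + g t) \in Lfun P q.
Proof. by move=> hf hg; exact: (Lfun_addr_closed _ q1).2. Qed.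

Lemma LfZ (r : R) (r1 : 1 <= r) (a : R) (f : T -> R) :
  f \in Lfun P r%:E -> (fun t => a * f t) \in Lfun P r%:E.
Proof.
move=> hf; have -> : (fun t => a * f t) = a \o* f by apply/funext => t; rewrite /= mulrC.
exact: Lfun_scale.
Qed.

Lemma Lf_lin2 {I : Type} (s : seq I) (X : I -> T -> R) (c : I -> R) (c0 : R) :
  (forall j, X j \in Lfun P 2%:E) ->
  (fun t => \sum_(j <- s) c j * X j t + c0) \in Lfun P 2%:E.
Proof.
move=> hX; apply: (LfD one_le2 (fun t => \sum_(j <- s) c j * X j t) (cst c0)); last exact: Lfun_cst.
elim: s => [|a s IH].
  by under eq_fun do rewrite big_nil; exact: Lfun_cst.
under eq_fun do rewrite big_cons.
apply: (LfD one_le2 (fun t => c a * X a t) (fun t => \sum_(j <- s) c j * X j t)) => //.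
by apply: LfZ => //; rewrite ler1n.
Qed.

Lemma L21 (f : T -> R) : f \in Lfun P 2%:E -> f \in Lfun P 1.
Proof. by apply: Lfun_subset12; exact: fin_num_measure. Qed.

Lemma ex_lin {I : Type} (s : seq I) (X : I -> T -> R) (c : I -> R) (c0 : R) :
  (forall j, X j \in Lfun P 2%:E) ->
  fine 'E_P[fun t => \sum_(j <- s) c j * X j t + c0] =
  \sum_(j <- s) c j * fine 'E_P[X j] + c0.
Proof.
move=> hX.
have Hs : forall s, (fun t => \sum_(j <- s) c j * X j t) \in Lfun P 2%:E.
  move=> s'; have := Lf_lin2 s' X c 0 hX.
  by under eq_fun do rewrite addr0.
rewrite -[fun t => _ + c0]/((fun t => \sum_(j <- s) c j * X j t) \+ cst c0).
rewrite expectationD ?L21 ?Lfun_cst // expectation_cst.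
rewrite fineD ?expectation_fin_num ?L21 ?Lfun_cst //=; congr (_ + _).
elim: s => [|a s IH].
  by under eq_fun do rewrite big_nil; rewrite expectation_cst big_nil.
under eq_fun do rewrite big_cons.
have -> : (fun t => c a * X a t + \sum_(j <- s) c j * X j t) =
  ((c a \o* X a) \+ (fun t => \sum_(j <- s) c j * X j t)).
  by apply/funext => t; rewrite /= mulrC.
rewrite expectationD ?L21 //; last by apply: Lfun_scale => //; rewrite ler1n.
rewrite fineD ?expectation_fin_num ?L21 //; last by apply: Lfun_scale => //; rewrite ler1n.
rewrite big_cons IH expectationZl ?L21 //= fineM ?expectation_fin_num ?L21 //.
Qed.

Lemma cv_lin {I : Type} (s : seq I) (X : I -> T -> R) (c : I -> R) (c0 : R) (Y : T -> R) :
  (forall j, X j \in Lfun P 2%:E) -> Y \in Lfun P 2%:E ->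
  fine (covariance P (fun t => \sum_(j <- s) c j * X j t + c0) Y) =
  \sum_(j <- s) c j * fine (covariance P (X j) Y).
Proof.
move=> hX hY.
have Hs : forall s, (fun t => \sum_(j <- s) c j * X j t) \in Lfun P 2%:E.
  move=> s'; have := Lf_lin2 s' X c 0 hX.
  by under eq_fun do rewrite addr0.
rewrite -[fun t => _ + c0]/((fun t => \sum_(j <- s) c j * X j t) \+ cst c0).
rewrite covarianceDl ?Lfun_cst // covariance_cst_l adde0.
elim: s => [|a s IH].
  by under eq_fun do rewrite big_nil; rewrite big_nil covariance_cst_l.
under eq_fun do rewrite big_cons.
have -> : (fun t => c a * X a t + \sum_(j <- s) c j * X j t) =
  ((c a \o* X a) \+ (fun t => \sum_(j <- s) c j * X j t)).
  by apply/funext => t; rewrite /= mulrC.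
have hXa : (c a \o* X a) \in Lfun P 2%:E by apply: Lfun_scale => //; rewrite ler1n.
have hXaY : (c a \o* X a \* Y) \in Lfun P 1 by exact: Lfun2_mul_Lfun1.
have hSY : ((fun t => \sum_(j <- s) c j * X j t) \* Y) \in Lfun P 1 by exact: Lfun2_mul_Lfun1.
have hXY : (X a \* Y) \in Lfun P 1 by exact: Lfun2_mul_Lfun1.
rewrite covarianceDl //.
rewrite fineD; last 2 first.
- by apply: covariance_fin_num; [exact: L21|exact: L21|exact: hXaY].
- by apply: covariance_fin_num; [exact: L21|exact: L21|exact: hSY].
rewrite big_cons IH covarianceZl; [|exact: L21|exact: L21|exact: hXY].
by rewrite fineM //; apply: covariance_fin_num; [exact: L21|exact: L21|exact: hXY].
Qed.
End lin.

Section alg.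
Context (R : realType).

Lemma alg_main (n : nat) (C U A : 'M[R]_n) (dv : 'rV[R]_n) (v : 'cV[R]_n) :
  U^T *m U = 1%:M -> C = U *m diag_mx dv *m U^T -> C \in unitmx -> A \in unitmx ->
  A *m C *m A^T = 1%:M -> v^T *m v = 1%:M ->
  let W := v^T *m inv_sqrt_from_eig U dv *m invmx A in
  \sum_k (W 0 k) ^+ 2 = 1.
Proof.
move=> hU heig hC hA hACA hv W.
have UUt : U *m U^T = 1%:M by exact: mulmx1C.
set Ai := invmx A.
have CA : C = Ai *m Ai^T.
  have h1 : Ai *m A = 1%:M by exact: mulVmx.
  have h2 : A^T *m Ai^T = 1%:M by rewrite -trmx_mul h1 trmx1.
  transitivity (Ai *m (A *m C *m A^T) *m Ai^T); last by rewrite hACA mulmx1.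
  by rewrite !mulmxA h1 mul1mx -mulmxA h2 mulmx1.
set M := U^T *m Ai.
have hD : diag_mx dv = M *m M^T.
  transitivity (U^T *m C *m U).
    by rewrite heig !mulmxA hU mul1mx -mulmxA hU mulmx1.
  by rewrite CA /M trmx_mul trmxK !mulmxA.
have dv_pos i : 0 < dv 0 i.
  rewrite lt_def; apply/andP; split.
    have hMu : M \in unitmx.
      rewrite unitmx_mul unitmx_inv hA andbT.
      by have [] := mulmx1_unit hU.
    have : diag_mx dv \in unitmx by rewrite hD unitmx_mul unitmx_tr hMu.
    rewrite unitmxE det_diag unitfE => /prodf_neq0; apply.
    done.
  have := congr1 (fun X : 'M[R]_n => X i i) hD; rewrite /= [diag_mx dv i i]mxE eqxx mulr1n => ->.
  rewrite [(M *m M^T) i i]mxE.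
  apply: sumr_ge0 => k _; rewrite [M^T k i]mxE -expr2; exact: sqr_ge0.
set Dm := diag_mx (\row_i (Num.sqrt (dv 0 i))^-1).
have DD : Dm *m diag_mx dv *m Dm = 1%:M.
  rewrite /Dm !mulmx_diag; apply/matrixP => i j; rewrite !mxE.
  case: eqP => _; rewrite ?mulr0n ?mulr1n //.
  have hs : 0 < Num.sqrt (dv 0 i) by rewrite sqrtr_gt0.
  rewrite -{2}(sqr_sqrtr (ltW (dv_pos i))).
  by field; exact: lt0r_neq0.
have ST : (inv_sqrt_from_eig U dv)^T = inv_sqrt_from_eig U dv.
  by rewrite /inv_sqrt_from_eig !trmx_mul tr_diag_mx trmxK mulmxA.
have SCS : inv_sqrt_from_eig U dv *m C *m (inv_sqrt_from_eig U dv)^T = 1%:M.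
  rewrite ST /inv_sqrt_from_eig -/Dm heig.
  transitivity (U *m (Dm *m (U^T *m U) *m diag_mx dv *m (U^T *m U) *m Dm) *m U^T).
    by rewrite !mulmxA.
  by rewrite hU !mulmx1 DD mulmx1.
have WW : W *m W^T = 1%:M.
  rewrite /W; move: SCS; set S := inv_sqrt_from_eig U dv => SCS.
  rewrite (trmx_mul (v^T *m S) Ai) (trmx_mul v^T S) trmxK.
  transitivity (v^T *m (S *m (Ai *m Ai^T) *m S^T) *m v).
    by rewrite !mulmxA.
  by rewrite -CA SCS mulmx1 hv.
have := congr1 (fun X : 'M[R]_1 => X 0 0) WW; rewrite /= !mxE eqxx mulr1n => <-.
by apply: eq_bigr => k _; rewrite [W^T k 0]mxE expr2.
Qed.
End alg.


Lemma le_bigmax_idx (R : realType) n (F : 'I_n -> R) x0 j :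
  F j <= \big[Num.max/x0]_(i < n) F i.
Proof.
have : j \in index_enum 'I_n by rewrite mem_index_enum.
elim: (index_enum 'I_n) => //= a s IH; rewrite inE big_cons => /orP[/eqP->|/IH h].
  by rewrite le_max lexx.
by rewrite le_max h orbT.
Qed.

Lemma ge_bigmin_idx (R : realType) n (F : 'I_n -> R) x0 j :
  \big[Num.min/x0]_(i < n) F i <= F j.
Proof.
have : j \in index_enum 'I_n by rewrite mem_index_enum.
elim: (index_enum 'I_n) => //= a s IH; rewrite inE big_cons => /orP[/eqP->|/IH h].
  by rewrite ge_min lexx.
by rewrite ge_min h orbT.
Qed.

Theorem theorem5 (d : measure_display) (T : measurableType d) (R : realType)
  (P : probability T R) (p : nat)
  (x : 'I_p.+1 -> T -> R)
  (hx2 : forall i, x i \in Lfun P 2%:E)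
  (hfull : covmx P x \in unitmx)
  (U : 'M[R]_p.+1) (dv : 'rV[R]_p.+1)
  (hU : U^T *m U = 1%:M)
  (heig : covmx P x = U *m diag_mx dv *m U^T)
  (A : 'M[R]_p.+1) (b : 'cV[R]_p.+1)
  (hA : A \in unitmx)
  (hind : mutually_independent P (affine_rv A b x))
  (hEz : forall i, ('E_P[affine_rv A b x i] = 0)%E)
  (hcovz : covmx P (affine_rv A b x) = 1%:M)
  (D : (T -> R) -> R)
  (hD : sq_dispersion P (lin_span (affine_rv A b x)) D)
  (v : 'cV[R]_p.+1) (hv : v^T *m v = 1%:M) :
  let z := affine_rv A b x in
  let xst := standardize P (inv_sqrt_from_eig U dv) x in
  (disp_subadditive P (lin_span z) D ->
     D (lincomb v xst) <= \big[Num.max/D (z ord0)]_(j < p.+1) D (z j)) /\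
  (disp_superadditive P (lin_span z) D ->
     \big[Num.min/D (z ord0)]_(j < p.+1) D (z j) <= D (lincomb v xst)).

Proof.
move=> z xst.
have hz2 i : z i \in Lfun P 2%:E.
  by apply: (@Lf_lin2 d T R P) => j; exact: hx2.
have mz i : measurable_fun setT (z i).
  by have := sub_Lfun_mfun (hz2 i); rewrite inE.
set m := meanvec P x.
set C := covmx P x.
have hm i : \sum_(j < p.+1) A i j * m j 0 + b i 0 = 0.
  have := congr1 fine (hEz i); rewrite /= (@ex_lin d T R P) // => h.
  rewrite -[RHS]h; congr (_ + _); apply: eq_bigr => j _; by rewrite /m /meanvec mxE.
have Csym j l : C j l = C l j by rewrite /C /covmx !mxE covarianceC.
have cvx j k : fine (covariance P (x j) (z k)) = \sum_(l < p.+1) A k l * C l j.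
  rewrite covarianceC (@cv_lin d T R P) //.
  by apply: eq_bigr => l _; rewrite /C /covmx mxE.
have hACA : A *m C *m A^T = 1%:M.
  rewrite -hcovz; apply/matrixP => i k.
  rewrite [RHS]mxE (@cv_lin d T R P) //.
  under [RHS]eq_bigr => j _ do rewrite cvx mulr_sumr.
  rewrite mxE exchange_big /=; apply: eq_bigr => l _.
  rewrite mxE mulr_suml; apply: eq_bigr => j _.
  by rewrite [A^T l k]mxE (Csym j l); ring.
have hsum := @alg_main R p.+1 C U A dv v hU heig hfull hA hACA hv.
set W := v^T *m inv_sqrt_from_eig U dv *m invmx A in hsum.
have hlin : lincomb v xst = (fun t => \sum_(k < p.+1) W 0 k * z k t).
  apply/funext => t.
  set xt := \col_j (x j t - m j 0).
  set zt := \col_k z k t.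
  have hzt : zt = A *m xt.
    apply/matrixP => k l; rewrite !mxE [l]ord1.
    have hb : b k 0 = - \sum_(j < p.+1) A k j * m j 0.
      by apply/eqP; rewrite -addr_eq0 addrC hm.
    rewrite /z /affine_rv hb -sumrN -big_split /=.
    by apply: eq_bigr => j _; rewrite !mxE mulrBr.
  have hx : xt = invmx A *m zt by rewrite hzt mulKmx.
  transitivity ((v^T *m (inv_sqrt_from_eig U dv *m xt)) 0 0).
    rewrite /lincomb /xst /standardize mxE; apply: eq_bigr => i _.
    rewrite !mxE; congr (_ * _); apply: eq_bigr => j _; by rewrite !mxE.
  rewrite hx !mulmxA -/W mxE; apply: eq_bigr => k _; by rewrite [zt _ _]mxE /W /inv_sqrt_from_eig !mulmxA.
have [hsub hsup] := @disp_sum d T R P p.+1 z hind mz D hD (fun k => W 0 k).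
rewrite hlin; split => hs.
  apply: le_trans (hsub hs) _.
  apply: (@le_trans _ _ (\sum_(k < p.+1) W 0 k ^+ 2 * \big[Num.max/D (z ord0)]_(j < p.+1) D (z j))).
    apply: ler_sum => k _; apply: ler_wpM2l; [exact: sqr_ge0| exact: le_bigmax_idx].
  by rewrite -mulr_suml hsum mul1r.
apply: le_trans _ (hsup hs).
apply: (@le_trans _ _ (\sum_(k < p.+1) W 0 k ^+ 2 * \big[Num.min/D (z ord0)]_(j < p.+1) D (z j))).
  by rewrite -mulr_suml hsum mul1r.
apply: ler_sum => k _; apply: ler_wpM2l; [exact: sqr_ge0| exact: ge_bigmin_idx].
Qed.
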